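(* Let $R_1,R_2$ be commutative rings with nonzero identity, $I_1$ an ideal of $R_1$, $I_2$ an ideal of $R_2$, $R=R_1\times R_2$ and $I=I_1\times I_2$. If $(x_1,y_1),(x_2,y_2)\in V(\Gamma''_{I_1}(R_1))\times V(\Gamma''_{I_2}(R_2))$ are not adjacent in $\Gamma''_I(R)$, then $x_1$ is not adjacent to $x_2$ in $\Gamma''_{I_1}(R_1)$ and $y_1$ is not adjacent to $y_2$ in $\Gamma''_{I_2}(R_2)$.
   Context: $R_1\times R_2$ has componentwise operations; $V(G)$ denotes the vertex set of a graph $G$. For a commutative ring $S$ and an ideal $J$ of $S$, $\Gamma''_J(S)$ is the simple undirected graph whose vertex set is $\{x\in S\setminus J : xS+J\neq S\}$, with distinct vertices $x,y$ adjacent if and only if $x\notin yS+J$ and $y\notin xS+J$. *)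

(* Defs.v *)
From HB Require Import structures.
From mathcomp Require Import all_boot all_algebra.
Set Implicit Arguments. Unset Strict Implicit. Unset Printing Implicit Defensive.
Import GRing.Theory.
Local Open Scope ring_scope.

Definition is_ideal (S : comNzRingType) (J : S -> Prop) : Prop :=
  [/\ J 0, (forall x y, J x -> J y -> J (x + y)) & (forall a x, J x -> J (a * x))].

Definition in_principal_plus (S : comNzRingType) (J : S -> Prop) (x z : S) : Prop :=
  exists s j, J j /\ z = x * s + j.

(* x is a vertex of Gamma''_J(S):  x \notin J  and  xS + J <> S *)
Definition gvertex (S : comNzRingType) (J : S -> Prop) (x : S) : Prop :=
  ~ J x /\ ~ (forall z, in_principal_plus J x z).

Definition gadj (S : comNzRingType) (J : S -> Prop) (x y : S) : Prop :=
  [/\ gvertex J x, gvertex J y, x <> y,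
      ~ in_principal_plus J y x & ~ in_principal_plus J x y].

Definition prod_ideal (R1 R2 : comNzRingType) (I1 : R1 -> Prop) (I2 : R2 -> Prop)
  : (R1 * R2)%type -> Prop := fun p => I1 p.1 /\ I2 p.2.

(* Main.v *)
Require Import Defs.
From mathcomp Require Import all_boot all_algebra.

Theorem corollary2p2 (R1 R2 : comNzRingType) (I1 : R1 -> Prop) (I2 : R2 -> Prop)
  (hI1 : is_ideal I1) (hI2 : is_ideal I2)
  (x1 x2 : R1) (y1 y2 : R2)
  (hx1 : gvertex I1 x1) (hx2 : gvertex I1 x2)
  (hy1 : gvertex I2 y1) (hy2 : gvertex I2 y2)
  (hna : ~ gadj (prod_ideal I1 I2) ((x1, y1) : (R1 * R2)%type) (x2, y2)) :
  ~ gadj I1 x1 x2 /\ ~ gadj I2 y1 y2.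
Proof.
have hv : forall (x : R1) (y : R2), gvertex I1 x -> gvertex I2 y ->
    gvertex (prod_ideal I1 I2) ((x, y) : (R1 * R2)%type).
  move=> x y [hx hx'] [hy hy']; split.
    by case.
  move=> hall; apply: hx' => z.
  case: (hall ((z, 0%R) : (R1 * R2)%type)) => [[s t] [[u v] [[hu hv] e]]].
  exists s, u; split => //.
  by move/(congr1 fst): e.
split.
  case=> _ _ hne h1 h2; apply: hna; split; try exact: hv.
  - by case.
  - case=> [[s t] [[u v] [[hu hv'] e]]]; apply: h1; exists s, u; split => //.
    by move/(congr1 fst): e.
  - case=> [[s t] [[u v] [[hu hv'] e]]]; apply: h2; exists s, u; split => //.
    by move/(congr1 fst): e.
case=> _ _ hne h1 h2; apply: hna; split; try exact: hv.
- by case.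
- case=> [[s t] [[u v] [[hu hv'] e]]]; apply: h1; exists t, v; split => //.
  by move/(congr1 snd): e.
- case=> [[s t] [[u v] [[hu hv'] e]]]; apply: h2; exists t, v; split => //.
  by move/(congr1 snd): e.
Qed.
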